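(* Let $n\ge3$ and let $i,j,k,l\in\{1,\dots,n\}$ be pairwise distinct indices (whenever they occur). Then in $VP_n$: 1) if $\max\{i,j\}<\max\{k,l\}$ and $\varepsilon=\pm1$, then $\lambda_{kl}^{\lambda_{ij}^{\varepsilon}}=\lambda_{kl}$; 2) if $i<j<k$ or $j<i<k$: $\lambda_{ik}^{\lambda_{ij}}=\lambda_{kj}^{\lambda_{ij}}\lambda_{ik}\lambda_{kj}^{-1}$ and $\lambda_{ik}^{\lambda_{ij}^{-1}}=\lambda_{kj}^{-1}\lambda_{ik}\lambda_{kj}^{\lambda_{ij}^{-1}}$; 3) if $i<j<k$ or $j<i<k$: $\lambda_{ki}^{\lambda_{ij}}=\lambda_{kj}\lambda_{ki}\lambda_{kj}^{-\lambda_{ij}}$ and $\lambda_{ki}^{\lambda_{ij}^{-1}}=\lambda_{kj}^{-\lambda_{ij}^{-1}}\lambda_{ki}\lambda_{kj}$; 4) if $i<j<k$ or $j<i<k$: $\lambda_{jk}^{\lambda_{ij}}=\lambda_{ik}\lambda_{jk}\lambda_{kj}\lambda_{ik}^{-1}\lambda_{kj}^{-\lambda_{ij}}$ and $\lambda_{jk}^{\lambda_{ij}^{-1}}=\lambda_{kj}^{-\lambda_{ij}^{-1}}\lambda_{ik}^{-1}\lambda_{kj}\lambda_{jk}\lambda_{ik}$.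
   Context: Notation: $a^b=b^{-1}ab$, $a^{-b}=(a^b)^{-1}$. The virtual braid group $VB_n$ is the group with generators $\sigma_1,\dots,\sigma_{n-1},\rho_1,\dots,\rho_{n-1}$ and defining relations: $\sigma_i\sigma_{i+1}\sigma_i=\sigma_{i+1}\sigma_i\sigma_{i+1}$, $\sigma_i\sigma_j=\sigma_j\sigma_i$ ($|i-j|\ge2$); $\rho_i\rho_{i+1}\rho_i=\rho_{i+1}\rho_i\rho_{i+1}$, $\rho_i\rho_j=\rho_j\rho_i$ ($|i-j|\ge2$), $\rho_i^2=1$; $\sigma_i\rho_j=\rho_j\sigma_i$ ($|i-j|\ge2$), $\rho_i\rho_{i+1}\sigma_i=\sigma_{i+1}\rho_i\rho_{i+1}$. $VP_n$ is the kernel of the homomorphism $VB_n\to S_n$ sending $\sigma_i,\rho_i$ to $(i,i+1)$. Define $\lambda_{i,i+1}=\rho_i\sigma_i^{-1}$, $\lambda_{i+1,i}=\sigma_i^{-1}\rho_i$, and for $1\le i<j-1\le n-1$: $\lambda_{ij}=\rho_{j-1}\cdots\rho_{i+1}\lambda_{i,i+1}\rho_{i+1}\cdots\rho_{j-1}$, $\lambda_{ji}=\rho_{j-1}\cdots\rho_{i+1}\lambda_{i+1,i}\rho_{i+1}\cdots\rho_{j-1}$. *)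

(* Defs.v *)
(* the virtual braid group VB_n as a finitely
   presented group, realised as the term model: group words modulo the
   smallest congruence containing the group axioms and the defining relations. *)
From mathcomp Require Import all_boot.
Set Implicit Arguments. Unset Strict Implicit. Unset Printing Implicit Defensive.

(* Group words on the generators sigma_i, rho_i (i : nat, 1-indexed). *)
Inductive word : Type :=
  | W1 : word
  | Sg : nat -> word
  | Rh : nat -> word
  | Wm : word -> word -> word
  | Wi : word -> word.

Definition valid (n i : nat) : bool := (1 <= i) && (i <= n.-1).

(* Equality in VB_n.  Generators with an index outside 1..n-1 are declared
   trivial, so that the quotient is exactly VB_n. *)
Inductive veq (n : nat) : word -> word -> Prop :=
  | veq_refl a : veq n a a
  | veq_sym a b : veq n a b -> veq n b a
  | veq_trans a b c : veq n a b -> veq n b c -> veq n a c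
  | veq_mul a a' b b' : veq n a a' -> veq n b b' -> veq n (Wm a b) (Wm a' b')
  | veq_inv a a' : veq n a a' -> veq n (Wi a) (Wi a')
  | veq_assoc a b c : veq n (Wm (Wm a b) c) (Wm a (Wm b c))
  | veq_unitl a : veq n (Wm W1 a) a
  | veq_unitr a : veq n (Wm a W1) a
  | veq_invl a : veq n (Wm (Wi a) a) W1
  | veq_invr a : veq n (Wm a (Wi a)) W1
  | veq_Sg_out i : ~~ valid n i -> veq n (Sg i) W1
  | veq_Rh_out i : ~~ valid n i -> veq n (Rh i) W1
  | veq_SSS i : valid n i -> valid n i.+1 ->
      veq n (Wm (Sg i) (Wm (Sg i.+1) (Sg i))) (Wm (Sg i.+1) (Wm (Sg i) (Sg i.+1)))
  | veq_SS i j : valid n i -> valid n j -> (i.+2 <= j) || (j.+2 <= i) ->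
      veq n (Wm (Sg i) (Sg j)) (Wm (Sg j) (Sg i))
  | veq_RRR i : valid n i -> valid n i.+1 ->
      veq n (Wm (Rh i) (Wm (Rh i.+1) (Rh i))) (Wm (Rh i.+1) (Wm (Rh i) (Rh i.+1)))
  | veq_RR i j : valid n i -> valid n j -> (i.+2 <= j) || (j.+2 <= i) ->
      veq n (Wm (Rh i) (Rh j)) (Wm (Rh j) (Rh i))
  | veq_R2 i : valid n i -> veq n (Wm (Rh i) (Rh i)) W1
  | veq_SR i j : valid n i -> valid n j -> (i.+2 <= j) || (j.+2 <= i) ->
      veq n (Wm (Sg i) (Rh j)) (Wm (Rh j) (Sg i))
  | veq_RRS i : valid n i -> valid n i.+1 ->
      veq n (Wm (Rh i) (Wm (Rh i.+1) (Sg i))) (Wm (Sg i.+1) (Wm (Rh i) (Rh i.+1))).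

(* a^b = b^{-1} a b *)
Definition conj (a b : word) : word := Wm (Wi b) (Wm a b).

Definition wprod (s : seq word) : word := foldr Wm W1 s.

(* rasc lo hi = rho_lo rho_{lo+1} ... rho_hi ;  rdesc lo hi = rho_hi ... rho_lo
   (both empty when hi < lo) *)
Definition rasc (lo hi : nat) : word := wprod [seq Rh k | k <- iota lo (hi.+1 - lo)].
Definition rdesc (lo hi : nat) : word := wprod [seq Rh k | k <- rev (iota lo (hi.+1 - lo))].

(* lambda_{ij} for i <> j (1-indexed):
   i < j : lambda_{ij} = rho_{j-1} ... rho_{i+1} (rho_i sigma_i^{-1}) rho_{i+1} ... rho_{j-1}
   j < i : lambda_{ij} = rho_{i-1} ... rho_{j+1} (sigma_j^{-1} rho_j) rho_{j+1} ... rho_{i-1} *)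
Definition lam (i j : nat) : word :=
  if i < j then
    Wm (rdesc i.+1 j.-1) (Wm (Wm (Rh i) (Wi (Sg i))) (rasc i.+1 j.-1))
  else
    Wm (rdesc j.+1 i.-1) (Wm (Wm (Wi (Sg j)) (Rh j)) (rasc j.+1 i.-1)).

Definition inrange (n i : nat) : bool := (1 <= i) && (i <= n).

(* Main.v *)
Require Import Defs.
From mathcomp Require Import all_boot zify.
From Stdlib Require Import Setoid Morphisms.
Require Import Defs.
Set Implicit Arguments. Unset Strict Implicit.

#[export] Instance veq_Equiv n : Equivalence (veq n).
Proof. split; [exact: veq_refl| exact: veq_sym| exact: veq_trans]. Qed.
#[export] Instance Wm_Proper n : Proper (veq n ==> veq n ==> veq n) Wm.
Proof. move=> a a' Ha b b' Hb; exact: veq_mul. Qed.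
#[export] Instance Wi_Proper n : Proper (veq n ==> veq n) Wi.
Proof. move=> a a' Ha; exact: veq_inv. Qed.

#[export] Instance conj_Proper n : Proper (veq n ==> veq n ==> veq n) Defs.conj.
Proof. move=> a a' Ha b b' Hb; rewrite /Defs.conj Ha Hb; reflexivity. Qed.

Lemma inv_uniq n a b : veq n (Wm a b) W1 -> veq n b (Wi a).
Proof.
move=> H. rewrite -(veq_unitl n b) -(veq_invl n a) veq_assoc H veq_unitr. reflexivity.
Qed.
Lemma invK n a : veq n (Wi (Wi a)) a.
Proof. symmetry; apply: inv_uniq; exact: veq_invl. Qed.
Lemma invM n a b : veq n (Wi (Wm a b)) (Wm (Wi b) (Wi a)).
Proof.
symmetry; apply: inv_uniq.
rewrite veq_assoc -(veq_assoc n b (Wi b)) veq_invr veq_unitl veq_invr. reflexivity.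
Qed.
Lemma inv1 n : veq n (Wi W1) W1.
Proof. symmetry; apply: inv_uniq; exact: veq_unitl. Qed.

Lemma R2 n k : veq n (Wm (Rh k) (Rh k)) W1.
Proof.
case V: (valid n k); first exact: veq_R2.
rewrite veq_Rh_out ?V // veq_unitl. reflexivity.
Qed.
Lemma Rinv n k : veq n (Wi (Rh k)) (Rh k).
Proof. symmetry; apply: inv_uniq; exact: R2. Qed.

Inductive atomT := AW of word | AR of nat.
Definition aval (x : atomT) := match x with AW w => w | AR k => Rh k end.
Definition isR (x : atomT) := if x is AR _ then true else false.

Inductive fexp := FA of nat | F1 | FM of fexp & fexp | FI of fexp.
Fixpoint interp (env : seq atomT) (e : fexp) : word :=
  match e with
  | FA k => aval (nth (AW W1) env k)
  | F1 => W1
  | FM a b => Wm (interp env a) (interp env b)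
  | FI a => Wi (interp env a)
  end.

Definition ilet env (x : bool * nat) : bool * nat :=
  if isR (nth (AW W1) env x.2) then (true, x.2) else (~~ x.1, x.2).
Fixpoint flat env (e : fexp) : seq (bool * nat) :=
  match e with
  | FA k => [:: (true, k)]
  | F1 => [::]
  | FM a b => flat env a ++ flat env b
  | FI a => rev (map (ilet env) (flat env a))
  end.
Definition cred env (x : bool * nat) (l : seq (bool * nat)) :=
  match l with
  | [::] => [:: x]
  | y :: r => if y == ilet env x then r else x :: y :: r
  end.
Definition red env (l : seq (bool * nat)) := foldr (cred env) [::] l.

Definition lval env (x : bool * nat) :=
  let w := aval (nth (AW W1) env x.2) in if x.1 then w else Wi w.
Definition evl env (l : seq (bool * nat)) := foldr (fun x acc => Wm (lval env x) acc) W1 l.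

Lemma evl_cat n env l1 l2 : veq n (evl env (l1 ++ l2)) (Wm (evl env l1) (evl env l2)).
Proof.
elim: l1 => [|x l IH] /=; first by rewrite veq_unitl; reflexivity.
rewrite IH veq_assoc; reflexivity.
Qed.

Lemma lval_ilet n env x : veq n (lval env (ilet env x)) (Wi (lval env x)).
Proof.
case: x => b k; rewrite /ilet /lval /=.
case E: (nth (AW W1) env k) => [w|r] /=; rewrite E /=.
  by case: b => /=; [reflexivity| rewrite invK; reflexivity].
by case: b => /=; rewrite ?Rinv; reflexivity.
Qed.

Lemma evl_rev n env l :
  veq n (evl env (rev (map (ilet env) l))) (Wi (evl env l)).
Proof.
elim: l => [|x l IH] /=; first by rewrite inv1; reflexivity.
rewrite rev_cons -cats1 evl_cat IH /= veq_unitr lval_ilet invM; reflexivity.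
Qed.

Lemma flat_ok n env e : veq n (interp env e) (evl env (flat env e)).
Proof.
elim: e => [k||a IHa b IHb|a IHa] /=.
- rewrite /lval /= veq_unitr; reflexivity.
- reflexivity.
- by rewrite evl_cat IHa IHb; reflexivity.
- by rewrite evl_rev IHa; reflexivity.
Qed.

Lemma cred_ok n env x l : veq n (evl env (cred env x l)) (Wm (lval env x) (evl env l)).
Proof.
case: l => [|y r] /=; first reflexivity.
case: eqP => [->|_]; last reflexivity.
rewrite -veq_assoc lval_ilet veq_invr veq_unitl; reflexivity.
Qed.

Lemma red_ok n env l : veq n (evl env (red env l)) (evl env l).
Proof.
elim: l => [|x l IH] /=; first reflexivity.
by rewrite cred_ok IH; reflexivity.
Qed.

Lemma fg_sound n env a b :
  red env (flat env a) = red env (flat env b) -> veq n (interp env a) (interp env b).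
Proof.
move=> H. rewrite !flat_ok -(red_ok n env (flat env a)) H red_ok; reflexivity.
Qed.

Ltac lookup a env :=
  lazymatch env with
  | cons a _ => constr:(0)
  | cons _ ?e => let k := lookup a e in constr:(S k)
  end.
Ltac atom_of t := lazymatch t with Rh ?k => constr:(AR k) | _ => constr:(AW t) end.
Ltac gather t env :=
  lazymatch t with
  | W1 => env
  | Wm ?a ?b => let e := gather a env in gather b e
  | Wi ?a => gather a env
  | _ => let x := atom_of t in
         match constr:(tt) with
         | _ => let _ := lookup x env in env
         | _ => constr:(cons x env)
         end
  end.
Ltac reify t env :=
  lazymatch t with
  | W1 => constr:(F1)
  | Wm ?a ?b => let x := reify a env in let y := reify b env in constr:(FM x y)
  | Wi ?a => let x := reify a env in constr:(FI x)
  | _ => let x := atom_of t in let k := lookup x env in constr:(FA k)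
  end.
Definition X i := Wm (Rh i) (Wi (Sg i)).
Definition Y i := Wm (Wi (Sg i)) (Rh i).
Definition RC s w := Wm (Rh s) (Wm w (Rh s)).
#[export] Instance RC_Proper n s : Proper (veq n ==> veq n) (RC s).
Proof. move=> a a' Ha; rewrite /RC Ha; reflexivity. Qed.
Ltac fg :=
  try unfold Defs.conj; try unfold X; try unfold Y; try unfold RC;
  lazymatch goal with
  | |- veq ?n ?A ?B =>
    let env := gather A (@nil atomT) in
    let env := gather B env in
    let ea := reify A env in
    let eb := reify B env in
    change (veq n (interp env ea) (interp env eb));
    apply: fg_sound; vm_compute; reflexivity
  end.

Lemma test n a b i : veq n (Wm (Wi (Wm a (Rh i))) (Wm a (Wm (Rh i) (Wm b (Wm (Wi b) (Rh i)))))) (Wm (Rh i) (Wm (Wi W1) (Wm (Rh i) (Rh i)))).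
Proof. fg. Qed.

Ltac step X := transitivity X; [fg|].

Definition As a m := wprod [seq Rh k | k <- iota a m].
Definition Ds a m := wprod [seq Rh k | k <- rev (iota a m)].

Lemma wprod_cat n s1 s2 : veq n (wprod (s1 ++ s2)) (Wm (wprod s1) (wprod s2)).
Proof.
elim: s1 => [|x s IH] /=; first by rewrite veq_unitl; reflexivity.
rewrite IH veq_assoc; reflexivity.
Qed.

Lemma AsSr n a m : veq n (As a m.+1) (Wm (As a m) (Rh (a + m))).
Proof.
rewrite /As -addn1 iotaD map_cat wprod_cat /= veq_unitr; reflexivity.
Qed.

Lemma Ds_inv n a m : veq n (Ds a m) (Wi (As a m)).
Proof.
elim: m a => [|m IH] a; first by rewrite /Ds /As /=; fg.
rewrite /Ds /= rev_cons map_rcons -cats1 wprod_cat.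
change (wprod [seq Rh k | k <- rev (iota a.+1 m)]) with (Ds a.+1 m).
rewrite IH /As /=. fg.
Qed.


Lemma lam_lt n i j : i < j -> veq n (lam i j) (conj (X i) (As i.+1 (j - i.+1))).
Proof.
move=> lt; rewrite /lam lt.
change (rdesc i.+1 j.-1) with (Ds i.+1 (j.-1.+1 - i.+1)).
change (rasc i.+1 j.-1) with (As i.+1 (j.-1.+1 - i.+1)).
have -> : j.-1.+1 = j by lia.
rewrite Ds_inv /conj /X; reflexivity.
Qed.

Lemma lam_gt n i j : j < i -> veq n (lam i j) (conj (Y j) (As j.+1 (i - j.+1))).
Proof.
move=> lt; rewrite /lam ltnNge (ltnW lt) /=.
change (rdesc j.+1 i.-1) with (Ds j.+1 (i.-1.+1 - j.+1)).
change (rasc j.+1 i.-1) with (As j.+1 (i.-1.+1 - j.+1)).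
have -> : i.-1.+1 = i by lia.
rewrite Ds_inv /conj /Y; reflexivity.
Qed.

Definition comm n a b := veq n (Wm a b) (Wm b a).
Lemma comm_sym n a b : comm n a b -> comm n b a.
Proof. rewrite /comm => H; symmetry; exact H. Qed.
Lemma comm1 n a : comm n a W1.
Proof. rewrite /comm; fg. Qed.
Lemma comm_inv n a b : comm n a b -> comm n a (Wi b).
Proof.
rewrite /comm => H. step (Wm (Wi b) (Wm (Wm b a) (Wi b))). rewrite -H. fg.
Qed.
Lemma comm_mul n a b c : comm n a b -> comm n a c -> comm n a (Wm b c).
Proof.
rewrite /comm => H1 H2. step (Wm (Wm a b) c). rewrite H1.
step (Wm b (Wm a c)). rewrite H2. fg.
Qed.

Definition far s t := (s.+2 <= t) || (t.+2 <= s).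

Lemma comm_RR n s t : far s t -> comm n (Rh s) (Rh t).
Proof.
move=> F; rewrite /comm.
case Vs: (valid n s); last by rewrite (veq_Rh_out (n:=n) (i:=s)) ?Vs //; fg.
case Vt: (valid n t); last by rewrite (veq_Rh_out (n:=n) (i:=t)) ?Vt //; fg.
exact: veq_RR.
Qed.
Lemma comm_RS n s t : far s t -> comm n (Rh s) (Sg t).
Proof.
move=> F; rewrite /comm.
case Vs: (valid n s); last by rewrite (veq_Rh_out (n:=n) (i:=s)) ?Vs //; fg.
case Vt: (valid n t); last by rewrite (veq_Sg_out (n:=n) (i:=t)) ?Vt //; fg.
symmetry; apply: veq_SR => //. move: F; rewrite /far; lia.
Qed.

Lemma comm_As n s a m : (s.+2 <= a) || (a + m < s) -> comm n (Rh s) (As a m).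
Proof.
elim: m a => [|m IH] a H; first exact: comm1.
rewrite /As /=; apply: comm_mul.
  apply: comm_RR; rewrite /far; lia.
apply: IH; lia.
Qed.

Lemma shift n a m s : 1 <= a -> a + m <= n -> a <= s -> s.+2 <= a + m ->
  veq n (Wm (As a m) (Rh s)) (Wm (Rh s.+1) (As a m)).
Proof.
elim: m a => [|m IH] a H1 H2 H3 H4; first by lia.
change (As a m.+1) with (Wm (Rh a) (As a.+1 m)).
case: (ltngtP a s) => [lt|gt|eq]; first last.
- subst s. case: m IH H2 H4 => [|m] IH H2 H4; first by lia.
  change (As a.+1 m.+1) with (Wm (Rh a.+1) (As a.+2 m)).
  have C : comm n (Rh a) (As a.+2 m) by apply: comm_As; lia.
  step (Wm (Rh a) (Wm (Rh a.+1) (Wm (As a.+2 m) (Rh a)))).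
  rewrite -C.
  step (Wm (Wm (Rh a) (Wm (Rh a.+1) (Rh a))) (As a.+2 m)).
  rewrite veq_RRR; last 2 first.
  - rewrite /valid; lia.
  - rewrite /valid; lia.
  fg.
- lia.
- step (Wm (Rh a) (Wm (As a.+1 m) (Rh s))).
  rewrite IH; try lia.
  step (Wm (Wm (Rh a) (Rh s.+1)) (As a.+1 m)).
  rewrite comm_RR; last by rewrite /far; lia.
  fg.
Qed.

Lemma Sinv n k : valid n k -> valid n k.+1 ->
  veq n (Wi (Sg k.+1)) (Wm (Rh k) (Wm (Rh k.+1) (Wm (Wi (Sg k)) (Wm (Rh k.+1) (Rh k))))).
Proof.
move=> V1 V2.
have E : veq n (Sg k.+1) (Wm (Rh k) (Wm (Rh k.+1) (Wm (Sg k) (Wm (Rh k.+1) (Rh k))))).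
  step (Wm (Wm (Sg k.+1) (Wm (Rh k) (Rh k.+1))) (Wm (Rh k.+1) (Rh k))).
  rewrite -veq_RRS //. fg.
rewrite E. fg.
Qed.

Lemma RRR' n k : valid n k -> valid n k.+1 ->
  veq n (Wm (Rh k) (Wm (Rh k.+1) (Rh k))) (Wm (Rh k.+1) (Wm (Rh k) (Rh k.+1))).
Proof. exact: veq_RRR. Qed.

Lemma Iden1 n k : valid n k -> valid n k.+1 ->
  veq n (Wm (Rh k) (Wm (Rh k.+1) (Wm (X k) (Wm (Rh k.+1) (Rh k))))) (X k.+1).
Proof.
move=> V1 V2; rewrite /X Sinv //.
step (Wm (Wm (Rh k) (Wm (Rh k.+1) (Rh k))) (Wm (Wi (Sg k)) (Wm (Rh k.+1) (Rh k)))).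
rewrite RRR' //. fg.
Qed.

Lemma Iden2 n k : valid n k -> valid n k.+1 ->
  veq n (Wm (Rh k) (Wm (X k.+1) (Rh k))) (Wm (Rh k.+1) (Wm (X k) (Rh k.+1))).
Proof.
move=> V1 V2; rewrite /X Sinv //.
step (Wm (Wm (Rh k) (Wm (Rh k.+1) (Rh k))) (Wm (Rh k.+1) (Wm (Wi (Sg k)) (Wm (Rh k.+1) (Wm (Rh k) (Rh k)))))).
rewrite RRR' //. fg.
Qed.

Lemma Iden3 n k : valid n k -> valid n k.+1 ->
  veq n (Wm (Rh k) (Wm (Rh k.+1) (Wm (Y k) (Wm (Rh k.+1) (Rh k))))) (Y k.+1).
Proof.
move=> V1 V2; rewrite /Y Sinv //.
step (Wm (Rh k) (Wm (Rh k.+1) (Wm (Wi (Sg k)) (Wm (Rh k) (Wm (Rh k.+1) (Rh k)))))).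
rewrite RRR' //. fg.
Qed.

Lemma Iden4 n k : valid n k -> valid n k.+1 ->
  veq n (Wm (Rh k) (Wm (Y k.+1) (Rh k))) (Wm (Rh k.+1) (Wm (Y k) (Rh k.+1))).
Proof.
move=> V1 V2; rewrite /Y Sinv //.
step (Wm (Rh k.+1) (Wm (Wi (Sg k)) (Wm (Wm (Rh k.+1) (Wm (Rh k) (Rh k.+1))) (Rh k)))).
rewrite -RRR' //. fg.
Qed.

Lemma cj_comm n s Z Q : comm n (Rh s) Q -> veq n (RC s (conj Z Q)) (conj (RC s Z) Q).
Proof.
move=> C; have C' := comm_inv C.
rewrite /RC /conj.
step (Wm (Wm (Rh s) (Wi Q)) (Wm Z (Wm Q (Rh s)))).
rewrite C' -C. fg.
Qed.

Lemma GA n s Z Q : comm n (Rh s) Z -> comm n (Rh s) Q -> veq n (RC s (conj Z Q)) (conj Z Q).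
Proof.
move=> CZ CQ; rewrite cj_comm // /RC.
step (conj (Wm (Wm (Rh s) Z) (Rh s)) Q). rewrite CZ. fg.
Qed.

Lemma GB n s Z P : veq n (Wm P (Rh s)) (Wm (Rh s.+1) P) -> comm n (Rh s.+1) Z ->
  veq n (RC s (conj Z P)) (conj Z P).
Proof.
move=> H CZ.
have H' : veq n (Wm (Wi P) (Rh s.+1)) (Wm (Rh s) (Wi P)).
  step (Wm (Wi P) (Wm (Wm (Rh s.+1) P) (Wi P))). rewrite -H. fg.
rewrite /RC /conj.
step (Wm (Wm (Rh s) (Wi P)) (Wm Z (Wm P (Rh s)))).
rewrite H -H'.
step (Wm (Wi P) (Wm (Wm (Rh s.+1) Z) (Wm (Rh s.+1) P))).
rewrite CZ. fg.
Qed.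

Lemma GC n a m Z : veq n (RC (a + m) (conj Z (As a m.+1))) (conj Z (As a m)).
Proof. rewrite AsSr /RC /conj. fg. Qed.

Lemma GD n a m Z : veq n (RC (a + m) (conj Z (As a m))) (conj Z (As a m.+1)).
Proof. rewrite AsSr /RC /conj. fg. Qed.

Lemma comm_X n s x : far s x -> comm n (Rh s) (X x).
Proof. move=> F; apply: comm_mul; [exact: comm_RR|apply: comm_inv; exact: comm_RS]. Qed.
Lemma comm_Y n s x : far s x -> comm n (Rh s) (Y x).
Proof. move=> F; apply: comm_mul; [apply: comm_inv; exact: comm_RS|exact: comm_RR]. Qed.

Definition tau s x := if x == s then s.+1 else if x == s.+1 then s else x.
Ltac tauv := rewrite /tau; repeat (case: eqP => ?); lia.

Lemma CJlt n x m s : 1 <= x -> x.+1 + m <= n -> 1 <= s -> s < n ->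
  veq n (RC s (lam x (x.+1 + m))) (lam (tau s x) (tau s (x.+1 + m))).
Proof.
move=> h1 h2 h3 h4.
rewrite lam_lt; last lia. rewrite (_ : x.+1 + m - x.+1 = m); last lia.
have [Ha|Ha] := boolP ((s.+2 <= x) || (x.+1 + m < s)).
  have C1 : comm n (Rh s) (X x) by apply: comm_X; rewrite /far; lia.
  have C2 : comm n (Rh s) (As x.+1 m) by apply: comm_As; lia.
  rewrite (GA C1 C2).
  rewrite (_ : tau s x = x); last tauv. rewrite (_ : tau s (x.+1+m) = x.+1+m); last tauv.
  rewrite lam_lt; last lia. rewrite (_ : x.+1 + m - x.+1 = m); last lia. reflexivity.
case: (eqVneq s.+1 x) => [Eg|Ng].
  subst x. rewrite (_ : tau s s.+1 = s); last tauv.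
  rewrite (_ : tau s (s.+2 + m) = s.+2+m); last tauv.
  rewrite lam_lt; last lia. rewrite (_ : s.+2 + m - s.+1 = m.+1); last lia.
  change (As s.+1 m.+1) with (Wm (Rh s.+1) (As s.+2 m)).
  rewrite cj_comm; last by apply: comm_As; lia.
  have I2 : veq n (RC s (X s.+1)) (RC s.+1 (X s)) by apply: Iden2; rewrite /valid; lia.
  rewrite I2. fg.
case: (eqVneq s x) => [Ee|Ne].
  subst x. case: m h2 Ha => [|m] h2 Ha.
    rewrite (_ : tau s s = s.+1); last tauv.
    rewrite (_ : tau s (s.+1 + 0) = s); last tauv.
    rewrite lam_gt; last lia. rewrite (_ : s.+1 - s.+1 = 0); last lia.
    rewrite /As /=. fg.
  rewrite (_ : tau s s = s.+1); last tauv.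
  rewrite (_ : tau s (s.+1 + m.+1) = s.+1 + m.+1); last tauv.
  rewrite lam_lt; last lia. rewrite (_ : s.+1 + m.+1 - s.+2 = m); last lia.
  change (As s.+1 m.+1) with (Wm (Rh s.+1) (As s.+2 m)).
  step (RC s (conj (RC s.+1 (X s)) (As s.+2 m))).
  rewrite cj_comm; last by apply: comm_As; lia.
  have I1 : veq n (RC s (RC s.+1 (X s))) (X s.+1).
    rewrite -(Iden1 (n:=n) (k:=s)); last 2 first.
      by rewrite /valid; lia. by rewrite /valid; lia.
    fg.
  rewrite I1. reflexivity.
case: (eqVneq s (x.+1 + m)) => [Ed|Nd].
  rewrite (_ : tau s x = x); last tauv.
  rewrite (_ : tau s (x.+1+m) = s.+1); last tauv.
  rewrite lam_lt; last lia. rewrite (_ : s.+1 - x.+1 = m.+1); last lia.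
  rewrite Ed GD. reflexivity.
case: (eqVneq s.+1 (x.+1 + m)) => [Ec|Nc].
  case: m h2 Ha Nd Ec => [|m] h2 Ha Nd Ec; first lia.
  rewrite (_ : tau s x = x); last tauv.
  rewrite (_ : tau s (x.+1+m.+1) = s); last tauv.
  rewrite lam_lt; last lia. rewrite (_ : s - x.+1 = m); last lia.
  have Es : s = x.+1 + m by lia.
  subst s. rewrite GC. reflexivity.
rewrite (_ : tau s x = x); last tauv.
rewrite (_ : tau s (x.+1+m) = x.+1+m); last tauv.
rewrite lam_lt; last lia. rewrite (_ : x.+1 + m - x.+1 = m); last lia.
apply: GB.
  apply: shift; lia.
apply: comm_X; rewrite /far; lia.
Qed.

Lemma CJgt n y m s : 1 <= y -> y.+1 + m <= n -> 1 <= s -> s < n ->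
  veq n (RC s (lam (y.+1 + m) y)) (lam (tau s (y.+1 + m)) (tau s y)).
Proof.
move=> h1 h2 h3 h4.
rewrite lam_gt; last lia. rewrite (_ : y.+1 + m - y.+1 = m); last lia.
have [Ha|Ha] := boolP ((s.+2 <= y) || (y.+1 + m < s)).
  have C1 : comm n (Rh s) (Y y) by apply: comm_Y; rewrite /far; lia.
  have C2 : comm n (Rh s) (As y.+1 m) by apply: comm_As; lia.
  rewrite (GA C1 C2).
  rewrite (_ : tau s y = y); last tauv. rewrite (_ : tau s (y.+1+m) = y.+1+m); last tauv.
  rewrite lam_gt; last lia. rewrite (_ : y.+1 + m - y.+1 = m); last lia. reflexivity.
case: (eqVneq s.+1 y) => [Eg|Ng].
  subst y. rewrite (_ : tau s s.+1 = s); last tauv.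
  rewrite (_ : tau s (s.+2 + m) = s.+2+m); last tauv.
  rewrite lam_gt; last lia. rewrite (_ : s.+2 + m - s.+1 = m.+1); last lia.
  change (As s.+1 m.+1) with (Wm (Rh s.+1) (As s.+2 m)).
  rewrite cj_comm; last by apply: comm_As; lia.
  have I2 : veq n (RC s (Y s.+1)) (RC s.+1 (Y s)) by apply: Iden4; rewrite /valid; lia.
  rewrite I2. fg.
case: (eqVneq s y) => [Ee|Ne].
  subst y. case: m h2 Ha => [|m] h2 Ha.
    rewrite (_ : tau s s = s.+1); last tauv.
    rewrite (_ : tau s (s.+1 + 0) = s); last tauv.
    rewrite lam_lt; last lia. rewrite (_ : s.+1 - s.+1 = 0); last lia.
    rewrite /As /=. fg.
  rewrite (_ : tau s s = s.+1); last tauv.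
  rewrite (_ : tau s (s.+1 + m.+1) = s.+1 + m.+1); last tauv.
  rewrite lam_gt; last lia. rewrite (_ : s.+1 + m.+1 - s.+2 = m); last lia.
  change (As s.+1 m.+1) with (Wm (Rh s.+1) (As s.+2 m)).
  step (RC s (conj (RC s.+1 (Y s)) (As s.+2 m))).
  rewrite cj_comm; last by apply: comm_As; lia.
  have I1 : veq n (RC s (RC s.+1 (Y s))) (Y s.+1).
    rewrite -(Iden3 (n:=n) (k:=s)); last 2 first.
      by rewrite /valid; lia. by rewrite /valid; lia.
    fg.
  rewrite I1. reflexivity.
case: (eqVneq s (y.+1 + m)) => [Ed|Nd].
  rewrite (_ : tau s y = y); last tauv.
  rewrite (_ : tau s (y.+1+m) = s.+1); last tauv.
  rewrite lam_gt; last lia. rewrite (_ : s.+1 - y.+1 = m.+1); last lia.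
  rewrite Ed GD. reflexivity.
case: (eqVneq s.+1 (y.+1 + m)) => [Ec|Nc].
  case: m h2 Ha Nd Ec => [|m] h2 Ha Nd Ec; first lia.
  rewrite (_ : tau s y = y); last tauv.
  rewrite (_ : tau s (y.+1+m.+1) = s); last tauv.
  rewrite lam_gt; last lia. rewrite (_ : s - y.+1 = m); last lia.
  have Es : s = y.+1 + m by lia.
  subst s. rewrite GC. reflexivity.
rewrite (_ : tau s y = y); last tauv.
rewrite (_ : tau s (y.+1+m) = y.+1+m); last tauv.
rewrite lam_gt; last lia. rewrite (_ : y.+1 + m - y.+1 = m); last lia.
apply: GB.
  apply: shift; lia.
apply: comm_Y; rewrite /far; lia.
Qed.

Lemma CJ n s x y : 1 <= s -> s < n -> inrange n x -> inrange n y -> x != y ->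
  veq n (RC s (lam x y)) (lam (tau s x) (tau s y)).
Proof.
move=> h1 h2 /andP[hx1 hx2] /andP[hy1 hy2] ne.
case: (ltngtP x y) => [lt|gt|eq]; last by rewrite eq eqxx in ne.
  have -> : y = x.+1 + (y - x.+1) by lia.
  apply: CJlt; lia.
have -> : x = y.+1 + (x - y.+1) by lia.
apply: CJgt; lia.
Qed.

Lemma tauK s x : tau s (tau s x) = x.
Proof.
case: (eqVneq x s) => [->|h1].
  rewrite {2}/tau eqxx /tau eqxx. case: eqP => //; lia.
case: (eqVneq x s.+1) => [->|h2].
  rewrite {2}/tau eqxx (negbTE (_ : s.+1 != s)) ?eqxx; last lia. by rewrite /tau eqxx.
by rewrite /tau (negbTE h1) (negbTE h2) (negbTE h1) (negbTE h2).
Qed.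

Lemma tau_cases s x : (x = s /\ tau s x = s.+1) \/ (x = s.+1 /\ tau s x = s) \/
  (x <> s /\ x <> s.+1 /\ tau s x = x).
Proof.
rewrite /tau; case: (eqVneq x s) => [->|h1]; first by left.
case: (eqVneq x s.+1) => [->|h2]; first by right; left.
right; right; split; [exact/eqP|split; [exact/eqP|done]].
Qed.

Ltac tauo := repeat match goal with H : is_true (inrange _ _) |- _ => move: H; rewrite /inrange => H end;
  repeat match goal with H : is_true (uniq _) |- _ => move: H; rewrite /= ?inE => H end;
  try rewrite /inrange; rewrite /= ?inE; repeat match goal with |- context[tau ?s ?x] =>
  let t := fresh "t" in have := tau_cases s x; generalize (tau s x) => t end; lia.

Lemma red3 n (P : nat -> nat -> nat -> Prop) :
  (forall s a b c, 1 <= s -> s < n -> inrange n a -> inrange n b -> inrange n c ->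
     uniq [:: a; b; c] -> P (tau s a) (tau s b) (tau s c) -> P a b c) ->
  P 1 2 3 ->
  forall a b c, inrange n a -> inrange n b -> inrange n c -> uniq [:: a; b; c] -> P a b c.
Proof.
move=> Hi B.
have S1 : forall c, 3 <= c -> c <= n -> P 1 2 c.
  elim=> [|c IH] h1 h2; first lia.
  case: (eqVneq c 2) => [->|ne] //.
  apply: (Hi c); try tauo.
  rewrite (_ : tau c 1 = 1); last tauo. rewrite (_ : tau c 2 = 2); last tauo.
  rewrite (_ : tau c c.+1 = c); last tauo. apply: IH; lia.
have S2 : forall b c, 2 <= b -> b <= n -> 2 <= c -> c <= n -> b != c -> P 1 b c.
  elim=> [|b IH] c h1 h2 h3 h4 h5; first lia.
  case: (eqVneq b 1) => [E|ne]; first by subst b; apply: S1; lia.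
  apply: (Hi b); try tauo.
  rewrite (_ : tau b 1 = 1); last tauo. rewrite (_ : tau b b.+1 = b); last tauo.
  apply: IH; tauo.
elim=> [|a IH] b c h1 h2 h3 h4; first by move: h1; rewrite /inrange; lia.
case: (eqVneq a 0) => [E|ne]; first by subst a; apply: S2; move: h2 h3 h4; rewrite /inrange /= ?inE; lia.
apply: (Hi a); try tauo.
rewrite (_ : tau a a.+1 = a); last tauo.
apply: IH; tauo.
Qed.

Lemma red4 n (P : nat -> nat -> nat -> nat -> Prop) :
  (forall s a b c d, 1 <= s -> s < n -> inrange n a -> inrange n b -> inrange n c ->
     inrange n d -> uniq [:: a; b; c; d] ->
     P (tau s a) (tau s b) (tau s c) (tau s d) -> P a b c d) ->
  P 1 2 3 4 ->
  forall a b c d, inrange n a -> inrange n b -> inrange n c -> inrange n d ->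
    uniq [:: a; b; c; d] -> P a b c d.
Proof.
move=> Hi B.
have S1 : forall d, 4 <= d -> d <= n -> P 1 2 3 d.
  elim=> [|d IH] h1 h2; first lia.
  case: (eqVneq d 3) => [->|ne] //.
  apply: (Hi d); try tauo.
  rewrite (_ : tau d 1 = 1); last tauo. rewrite (_ : tau d 2 = 2); last tauo.
  rewrite (_ : tau d 3 = 3); last tauo.
  rewrite (_ : tau d d.+1 = d); last tauo. apply: IH; lia.
have S2 : forall c d, 3 <= c -> c <= n -> 3 <= d -> d <= n -> c != d -> P 1 2 c d.
  elim=> [|c IH] d h1 h2 h3 h4 h5; first lia.
  case: (eqVneq c 2) => [E|ne]; first by subst c; apply: S1; lia.
  apply: (Hi c); try tauo.
  rewrite (_ : tau c 1 = 1); last tauo. rewrite (_ : tau c 2 = 2); last tauo.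
  rewrite (_ : tau c c.+1 = c); last tauo.
  apply: IH; tauo.
have S3 : forall b c d, 2 <= b -> b <= n -> 2 <= c -> c <= n -> 2 <= d -> d <= n ->
    uniq [:: b; c; d] -> P 1 b c d.
  elim=> [|b IH] c d h1 h2 h3 h4 h5 h6 h7; first lia.
  case: (eqVneq b 1) => [E|ne]; first by subst b; apply: S2; move: h7; rewrite /= ?inE; lia.
  apply: (Hi b); try tauo.
  rewrite (_ : tau b 1 = 1); last tauo.
  rewrite (_ : tau b b.+1 = b); last tauo.
  apply: IH; tauo.
elim=> [|a IH] b c d h1 h2 h3 h4 h5; first by move: h1; rewrite /inrange; lia.
case: (eqVneq a 0) => [E|ne].
  subst a; apply: S3; move: h2 h3 h4 h5; rewrite /inrange /= ?inE; lia.
apply: (Hi a); try tauo.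
rewrite (_ : tau a a.+1 = a); last tauo.
apply: IH; tauo.
Qed.

Lemma CJ' n s x y : 1 <= s -> s < n -> inrange n x -> inrange n y -> x != y ->
  veq n (lam x y) (RC s (lam (tau s x) (tau s y))).
Proof.
move=> h1 h2 hx hy ne; symmetry.
rewrite CJ ?tauK; [reflexivity| | | | |]; tauo.
Qed.

Definition Bprop n a b c := veq n (Wm (lam c a) (Wm (lam c b) (lam a b)))
  (Wm (lam a b) (Wm (lam c b) (lam c a))).
Definition Aprop n a b c d := veq n (Wm (lam a b) (lam c d)) (Wm (lam c d) (lam a b)).

Lemma Binv n s a b c : 1 <= s -> s < n -> inrange n a -> inrange n b -> inrange n c ->
  uniq [:: a; b; c] -> Bprop n (tau s a) (tau s b) (tau s c) -> Bprop n a b c.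
Proof.
move=> h1 h2 ha hb hc U H; rewrite /Bprop in H *.
rewrite (@CJ' n s c a) ?(@CJ' n s c b) ?(@CJ' n s a b) //; try tauo.
step (RC s (Wm (lam (tau s c) (tau s a)) (Wm (lam (tau s c) (tau s b)) (lam (tau s a) (tau s b))))).
rewrite H. fg.
Qed.

Lemma Ainv n s a b c d : 1 <= s -> s < n -> inrange n a -> inrange n b -> inrange n c ->
  inrange n d -> uniq [:: a; b; c; d] ->
  Aprop n (tau s a) (tau s b) (tau s c) (tau s d) -> Aprop n a b c d.
Proof.
move=> h1 h2 ha hb hc hd U H; rewrite /Aprop in H *.
rewrite (@CJ' n s a b) ?(@CJ' n s c d) //; try tauo.
step (RC s (Wm (lam (tau s a) (tau s b)) (lam (tau s c) (tau s d)))).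
rewrite H. fg.
Qed.

Lemma baseB n : 3 <= n -> Bprop n 2 3 1.
Proof.
move=> hn; rewrite /Bprop.
have L12 : veq n (lam 1 2) (X 1) by rewrite /lam /rdesc /rasc /=; fg.
have L23 : veq n (lam 2 3) (X 2) by rewrite /lam /rdesc /rasc /=; fg.
have C3 : veq n (RC 1 (lam 1 3)) (lam 2 3).
  rewrite CJ; [rewrite /tau /=; reflexivity| ..]; try rewrite /inrange; lia.
have C4 : veq n (RC 2 (lam 1 3)) (lam 1 2).
  rewrite CJ; [rewrite /tau /=; reflexivity| ..]; try rewrite /inrange; lia.
have V1 : valid n 1 by rewrite /valid; lia.
have V2 : valid n 2 by rewrite /valid; lia.
have B := veq_SSS V1 V2.
have S1 : veq n (Sg 1) (Wm (Wi (RC 2 (lam 1 3))) (Rh 1)) by rewrite C4 L12; fg.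
have S2 : veq n (Sg 2) (Wm (Wi (RC 1 (lam 1 3))) (Rh 2)) by rewrite C3 L23; fg.
rewrite S1 S2 in B.
rewrite -C4 -C3.
match type of B with veq _ ?lb ?rb =>
  step (Wi (Wm rb (Wm (Rh 2) (Wm (Rh 1) (Rh 2))))); rewrite -B;
  rewrite -(@RRR' n 1) //; fg
end.
Qed.

Lemma baseA n : 4 <= n -> Aprop n 1 2 3 4.
Proof.
move=> hn; rewrite /Aprop.
have L12 : veq n (lam 1 2) (X 1) by rewrite /lam /rdesc /rasc /=; fg.
have L34 : veq n (lam 3 4) (X 3) by rewrite /lam /rdesc /rasc /=; fg.
rewrite L12 L34.
have CR : comm n (X 3) (Rh 1) by apply: comm_sym; apply: comm_X.
have CS : comm n (X 3) (Sg 1).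
  apply: comm_sym; apply: comm_mul.
    apply: comm_sym; apply: comm_RS => //.
  apply: comm_inv; apply: veq_SS => //; rewrite /valid; lia.
have := comm_mul CR (comm_inv CS). rewrite /comm => C. symmetry. exact C.
Qed.

Lemma Ball n : 3 <= n -> forall a b c, inrange n a -> inrange n b -> inrange n c ->
  uniq [:: a; b; c] -> Bprop n a b c.
Proof.
move=> hn a b c ha hb hc U.
apply: (@red3 n (fun x y z => Bprop n y z x)); [| exact: baseB | by [] | by [] | by [] |
  by move: U; rewrite /= !inE; lia].
move=> s x y z h1 h2 hx hy hz U' H /=.
apply: (Binv h1 h2) => //. by move: U'; rewrite /= !inE; lia.
Qed.

Lemma Aall n : 3 <= n -> forall a b c d, inrange n a -> inrange n b -> inrange n c ->
  inrange n d -> uniq [:: a; b; c; d] -> Aprop n a b c d.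
Proof.
move=> hn a b c d ha hb hc hd U.
case: (eqVneq n 3) => [E|ne].
  subst n; move: ha hb hc hd U; rewrite /inrange /= !inE; lia.
have hn4 : 4 <= n by lia.
apply: (@red4 n (Aprop n) _ (baseA hn4)) => //.
move=> s x y z w h1 h2 hx hy hz hw U' H.
exact: (Ainv h1 h2).
Qed.

Unset Implicit Arguments.
Theorem lemma5 (n : nat) (hn : 3 <= n) :
  (* 1) *)
  (forall i j k l : nat,
     inrange n i -> inrange n j -> inrange n k -> inrange n l ->
     uniq [:: i; j; k; l] ->
     maxn i j < maxn k l ->
     veq n (conj (lam k l) (lam i j)) (lam k l) /\
     veq n (conj (lam k l) (Wi (lam i j))) (lam k l)) /\
  (* 2) *)
  (forall i j k : nat,
     inrange n i -> inrange n j -> inrange n k -> uniq [:: i; j; k] ->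
     (i < j < k) || (j < i < k) ->
     veq n (conj (lam i k) (lam i j))
           (Wm (conj (lam k j) (lam i j)) (Wm (lam i k) (Wi (lam k j)))) /\
     veq n (conj (lam i k) (Wi (lam i j)))
           (Wm (Wi (lam k j)) (Wm (lam i k) (conj (lam k j) (Wi (lam i j)))))) /\
  (* 3) *)
  (forall i j k : nat,
     inrange n i -> inrange n j -> inrange n k -> uniq [:: i; j; k] ->
     (i < j < k) || (j < i < k) ->
     veq n (conj (lam k i) (lam i j))
           (Wm (lam k j) (Wm (lam k i) (Wi (conj (lam k j) (lam i j))))) /\
     veq n (conj (lam k i) (Wi (lam i j)))
           (Wm (Wi (conj (lam k j) (Wi (lam i j)))) (Wm (lam k i) (lam k j)))) /\
  (* 4) *)
  (forall i j k : nat,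
     inrange n i -> inrange n j -> inrange n k -> uniq [:: i; j; k] ->
     (i < j < k) || (j < i < k) ->
     veq n (conj (lam j k) (lam i j))
           (Wm (lam i k) (Wm (lam j k) (Wm (lam k j)
              (Wm (Wi (lam i k)) (Wi (conj (lam k j) (lam i j))))))) /\
     veq n (conj (lam j k) (Wi (lam i j)))
           (Wm (Wi (conj (lam k j) (Wi (lam i j)))) (Wm (Wi (lam i k))
              (Wm (lam k j) (Wm (lam j k) (lam i k)))))).
Proof.
have uq : forall a b c : nat, uniq [:: a; b; c] -> uniq [:: c; a; b] /\ uniq [:: b; a; c] /\ uniq [:: a; c; b]
   /\ uniq [:: b; c; a] /\ uniq [:: c; b; a].
  by move=> a b c; rewrite /= !inE; lia.
split.
  move=> i j k l hi hj hk hl U _.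
  have A := Aall hn hi hj hk hl U. rewrite /Aprop in A.
  split.
    step (Wm (Wi (lam i j)) (Wm (lam k l) (lam i j))). rewrite -A. fg.
  step (Wm (Wm (lam i j) (lam k l)) (Wi (lam i j))). rewrite A. fg.
split.
  move=> i j k hi hj hk U _.
  have [U1 [U2 [U3 [U4 U5]]]] := uq _ _ _ U.
  have H := Ball hn hk hj hi U5. rewrite /Bprop in H.
  split.
    step (Wm (Wi (lam i j)) (Wm (Wm (lam i k) (Wm (lam i j) (lam k j))) (Wi (lam k j)))).
    rewrite H. fg.
  step (Wm (Wi (lam k j)) (Wm (Wm (lam k j) (Wm (lam i j) (lam i k))) (Wi (lam i j)))).
  rewrite -H. fg.
split.
  move=> i j k hi hj hk U _.
  have H := Ball hn hi hj hk U. rewrite /Bprop in H.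
  split.
    step (Wm (Wi (lam i j)) (Wm (Wm (lam k i) (Wm (lam k j) (lam i j)))
           (Wm (Wi (lam i j)) (Wm (Wi (lam k j)) (lam i j))))).
    rewrite H. fg.
  step (Wm (lam i j) (Wm (Wi (lam k j)) (Wm (Wi (lam i j))
          (Wm (Wm (lam i j) (Wm (lam k j) (lam k i))) (Wi (lam i j)))))).
  rewrite -H. fg.
move=> i j k hi hj hk U _.
have [U1 [U2 [U3 [U4 U5]]]] := uq _ _ _ U.
have H1 := Ball hn hk hj hi U5. rewrite /Bprop in H1.
have H2 := Ball hn hj hk hi U4. rewrite /Bprop in H2.
split.
  step (Wm (Wi (lam i j)) (Wm (Wm (lam j k) (Wm (lam i k) (lam i j)))
         (Wm (Wi (lam i j)) (Wm (Wi (lam i k)) (lam i j))))).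
  rewrite -H2.
  step (Wm (lam i k) (Wm (lam j k) (Wm (lam k j)
         (Wm (Wi (Wm (lam i k) (Wm (lam i j) (lam k j)))) (lam i j))))).
  rewrite H1. fg.
step (Wm (lam i j) (Wm (Wi (lam i k)) (Wm (Wi (lam i j))
       (Wm (Wm (lam i j) (Wm (lam i k) (lam j k))) (Wi (lam i j)))))).
rewrite H2.
step (Wm (lam i j) (Wm (Wm (Wi (Wm (lam k j) (Wm (lam i j) (lam i k)))) (lam k j))
       (Wm (lam j k) (lam i k)))).
rewrite -H1. fg.
Qed.
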